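(* Let $\mathfrak V$ be a vessel on $\Omega\subseteq\mathbb R$. Then for all $x\in\Omega$ and all $u\in D(A)$, $\sigma_1\frac{d}{dx}[C(x)\mathbb X^{-1}(x)]u=\sigma_2C(x)\mathbb X^{-1}(x)Au+\gamma_*(x)C(x)\mathbb X^{-1}(x)u$, and $\frac{d}{dx}[\mathbb X^{-1}(x)B(x)]\sigma_1=A_\zeta\mathbb X^{-1}(x)B(x)\sigma_2-\mathbb X^{-1}(x)B(x)\gamma_*(x)$.
   Context: A Krein space $\mathcal K$ is a Hilbert space with an extra continuous Hermitian (possibly indefinite) sesquilinear form; adjoints are with respect to it. Fix $2\times2$ matrices $\sigma_1$ (invertible, self-adjoint), $\sigma_2=\sigma_2^*$, $\gamma=-\gamma^*$. A node $(C,A_\zeta,\mathbb X,A,B;\sigma_1)$: bounded $C:\mathcal K\to\mathbb C^2$, $\mathbb X:\mathcal K\to\mathcal K$, $B:\mathbb C^2\to\mathcal K$, generators $A,A_\zeta$ of strongly continuous groups with common dense domain $D(A)=D(A_\zeta)$, with $\mathbb X(D(A))\subseteq D(A)$ and $A\mathbb Xu+\mathbb XA_\zeta u+B\sigma_1Cu=0$ for $u\in D(A)$; invertible if $\mathbb X$ is boundedly invertible and $\mathbb X^{-1}(D(A))\subseteq D(A)$. A prevessel: fixed $A,A_\zeta$ and bounded operators $C(x),\mathbb X(x),B(x)$ differentiable in $x\in\mathbb R$, each tuple a node, $B(x)\sigma_2e\in D(A)$ for $e\in\mathbb C^2$, with $\partial_xB=-(AB\sigma_2+B\gamma)\sigma_1^{-1}$,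 $\partial_xCu=\sigma_1^{-1}(-\sigma_2CA_\zeta u+\gamma Cu)$ ($u\in D(A)$), $\partial_x\mathbb X=B\sigma_2C$. A vessel on $\Omega$: a prevessel whose node is invertible for all $x\in\Omega$, with $\gamma_*(x)=\gamma+\sigma_2C\mathbb X^{-1}B\sigma_1-\sigma_1C\mathbb X^{-1}B\sigma_2$ on $\Omega$. *)

(* Defs.v *)
From HB Require Import structures.
From mathcomp Require Import all_boot all_order all_algebra.
From mathcomp Require Import complex.
From mathcomp Require Import boolp classical_sets functions reals topology normedtype.
Import numFieldNormedType.Exports.
Export numFieldNormedType.Exports.

Set Implicit Arguments.
Unset Strict Implicit.
Unset Printing Implicit Defensive.

Import Order.TTheory GRing.Theory Num.Theory.
Local Open Scope classical_set_scope.
Local Open Scope ring_scope.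
Local Open Scope complex_scope.

Definition mxadj (R : realType) (m n : nat) (M : 'M[R[i]]_(m, n)) : 'M[R[i]]_(n, m) :=
  map_mx (@conjc R) M^T.

Definition bounded_op (R : realType) (U W : normedModType R[i]) (T : U -> W) : Prop :=
  linear T /\ exists M : R[i], forall u, `|T u| <= M * `|u|.

Definition hilbert_ip (R : realType) (K : normedModType R[i]) (ip : K -> K -> R[i]) : Prop :=
  (forall v, linear (fun u => ip u v)) /\
  (forall u v, ip v u = (ip u v)^*) /\
  (forall u, ip u u = `|u| ^+ 2).

Definition krein_form (R : realType) (K : normedModType R[i]) (kf : K -> K -> R[i]) : Prop :=
  (forall v, linear (fun u => kf u v)) /\
  (forall u v, kf v u = (kf u v)^*) /\
  (exists M : R[i], forall u v, `|kf u v| <= M * `|u| * `|v|).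

Definition C0_group (R : realType) (K : normedModType R[i]) (S : R -> K -> K) : Prop :=
  (forall t, bounded_op (S t)) /\
  (forall u, S 0 u = u) /\
  (forall s t u, S (s + t) u = S s (S t u)) /\
  (forall u, continuous (fun t => S t u)).

Definition generator (R : realType) (K : normedModType R[i]) (S : R -> K -> K)
  (dom : set K) (A : K -> K) : Prop :=
  forall u, (dom u <-> exists l : K, (h^-1)%:C *: (S h u - u) @[h --> (0:R)^'+] --> l) /\
            (dom u -> (h^-1)%:C *: (S h u - u) @[h --> (0:R)^'+] --> A u).

Definition has_opderiv (R : realType) (U W : normedModType R[i]) (T : R -> U -> W)
  (x : R) (D : U -> W) : Prop :=
  forall eps : R, 0 < eps -> exists2 delta : R, 0 < delta &
    forall h : R, h != 0 -> `|h| < delta ->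
      forall u, `|(h^-1)%:C *: (T (x + h) u - T x u) - D u| <= eps%:C * `|u|.

Definition bounded_inverse (R : realType) (K : normedModType R[i]) (X Y : K -> K) : Prop :=
  bounded_op Y /\ (forall u, X (Y u) = u) /\ (forall u, Y (X u) = u).

(* Node (C, A_zeta, X, A, B; sigma1) (the generator conditions on A, A_zeta
   are imposed separately). *)
Definition is_node (R : realType) (K : normedModType R[i])
  (C : K -> 'cV[R[i]]_2) (Az : K -> K) (X : K -> K) (A : K -> K) (B : 'cV[R[i]]_2 -> K)
  (s1 : 'M[R[i]]_2) (dom : set K) : Prop :=
  bounded_op C /\ bounded_op X /\ bounded_op B /\
  (forall u, dom u -> dom (X u)) /\
  (forall u, dom u -> A (X u) + X (Az u) + B (s1 *m C u) = 0).

Definition prevessel (R : realType) (K : normedModType R[i])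
  (s1 s2 g : 'M[R[i]]_2) (A Az : K -> K) (dom : set K)
  (C : R -> K -> 'cV[R[i]]_2) (X : R -> K -> K) (B : R -> 'cV[R[i]]_2 -> K) : Prop :=
  forall x : R,
    is_node (C x) Az (X x) A (B x) s1 dom /\
    (forall e, dom (B x (s2 *m e))) /\
    has_opderiv B x (fun e => - (A (B x (s2 *m (invmx s1 *m e))) + B x (g *m (invmx s1 *m e)))) /\
    (exists D, has_opderiv C x D /\
       forall u, dom u -> D u = invmx s1 *m (- (s2 *m C x (Az u)) + g *m C x u)) /\
    has_opderiv X x (fun u => B x (s2 *m C x u)).

Definition gamma_star (R : realType) (K : normedModType R[i])
  (s1 s2 g : 'M[R[i]]_2) (C : R -> K -> 'cV[R[i]]_2) (Xinv : R -> K -> K)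
  (B : R -> 'cV[R[i]]_2 -> K) (x : R) (e : 'cV[R[i]]_2) : 'cV[R[i]]_2 :=
  g *m e + s2 *m C x (Xinv x (B x (s1 *m e))) - s1 *m C x (Xinv x (B x (s2 *m e))).

(* Main.v *)
Require Import Defs.
From HB Require Import structures.
From mathcomp Require Import all_boot all_order all_algebra.
From mathcomp Require Import complex.
From mathcomp Require Import boolp classical_sets functions reals topology normedtype sequences.
From mathcomp Require Import ring lra.
Import numFieldNormedType.Exports.
Import Order.TTheory GRing.Theory Num.Theory.
Local Open Scope classical_set_scope.
Local Open Scope ring_scope.
Local Open Scope complex_scope.
Set Implicit Arguments. Unset Strict Implicit. Unset Printing Implicit Defensive.

Section Norms.
Variables (R : realType) (K : normedModType R[i]).

Definition nn (v : K) : R := complex.Re `|v|.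

Lemma nnE v : `|v| = (nn v)%:C.
Proof. by rewrite /nn RRe_real // normr_real. Qed.

Lemma nn_ge0 v : 0 <= nn v.
Proof. by rewrite -ler0c -nnE. Qed.

Lemma nnD a b : nn (a + b) <= nn a + nn b.
Proof. by rewrite -lecR rmorphD /= -!nnE ler_normD. Qed.

Lemma nnN a : nn (- a) = nn a.
Proof. by rewrite /nn normrN. Qed.

Lemma nnB a b : nn (a - b) <= nn a + nn b.
Proof. by rewrite -(nnN b) nnD. Qed.

Lemma nn0 : nn 0 = 0.
Proof. by rewrite /nn normr0. Qed.

Lemma nn_eq0 v : nn v <= 0 -> v = 0.
Proof.
move=> h; have : nn v = 0 by apply/eqP; rewrite eq_le h nn_ge0.
by move=> h0; apply/normr0_eq0; rewrite nnE h0.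
Qed.

Lemma normcR (r : R) : `|r%:C| = `|r|%:C.
Proof. by rewrite normc_def /= expr0n /= addr0 sqrtr_sqr. Qed.

Lemma nnZ (r : R) v : nn (r%:C *: v) = `|r| * nn v.
Proof. by rewrite /nn normrZ normcR nnE /= !mulr0 subr0. Qed.

Lemma le_nn a b : (`|a| <= `|b|) = (nn a <= nn b).
Proof. by rewrite !nnE lecR. Qed.
End Norms.
Section Lin.
Variables (R : realType) (U W : lmodType R[i]) (T : U -> W).
Hypothesis HT : linear T.
Lemma lin0 : T 0 = 0.
Proof. have := HT 1 0 0; rewrite !scale1r !addr0 => h. by apply: (@addrI _ (T 0)); rewrite addr0 -h. Qed.
Lemma linD u v : T (u + v) = T u + T v.
Proof. by have := HT 1 u v; rewrite !scale1r. Qed.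
Lemma linZ a u : T (a *: u) = a *: T u.
Proof. by have := HT a u 0; rewrite !addr0 lin0 addr0. Qed.
Lemma linN u : T (- u) = - T u.
Proof. by rewrite -scaleN1r linZ scaleN1r. Qed.
Lemma linB u v : T (u - v) = T u - T v.
Proof. by rewrite linD linN. Qed.
End Lin.

Section Bnd.
Variables (R : realType).
Implicit Types (U W : normedModType R[i]).

Definition nbd U W (T : U -> W) (c : R) := forall u, nn (T u) <= c * nn u.

Lemma bounded_nbd U W (T : U -> W) : bounded_op T -> exists2 c, 0 <= c & nbd T c.
Proof.
case=> _ [M HM]; exists `|complex.Re M|; first exact: normr_ge0.
move=> u; have := HM u; rewrite !nnE lecE => /andP[_].
have -> : complex.Re (M * (nn u)%:C) = complex.Re M * nn u.
  by case: M {HM} => a b /=; rewrite mulr0 subr0.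
move=> h; apply: (le_trans h); apply: ler_wpM2r; first exact: nn_ge0.
exact: real_ler_norm (num_real _).
Qed.

Definition hasd U W (T : R -> U -> W) (x : R) (D : U -> W) :=
  forall eps : R, 0 < eps -> exists2 delta : R, 0 < delta &
    forall h : R, h != 0 -> `|h| < delta ->
      forall u, nn ((h^-1)%:C *: (T (x + h) u - T x u) - D u) <= eps * nn u.

Lemma hasdP U W (T : R -> U -> W) x D : has_opderiv T x D <-> hasd T x D.
Proof.
split=> H eps /H [d d0 Hd]; exists d => // h h0 hd u; have := Hd h h0 hd u.
  by rewrite !nnE -rmorphM lecR.
by rewrite !nnE -rmorphM lecR.
Qed.
End Bnd.

Section Deriv.
Variables (R : realType).
Implicit Types (U W V : normedModType R[i]).

Lemma nnZc U (r : R) (v : U) : nn (r%:C *: v) = `|r| * nn v.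
Proof. exact: nnZ. Qed.

Lemma deriv_nbd U W (T : R -> U -> W) x D :
  hasd T x D -> (forall y, exists2 c, 0 <= c & nbd (T y) c) ->
  exists2 c, 0 <= c & nbd D c.
Proof.
move=> HD HT; have [d d0 Hd] := HD 1 ltr01.
set h := d / 2.
have h0 : h != 0 by rewrite /h gt_eqF // divr_gt0.
have hd : `|h| < d by rewrite /h ger0_norm ?divr_ge0 ?ltW // ltr_pdivrMr // ltr_pMr // ltr1n.
have [c1 c10 H1] := HT (x + h); have [c2 c20 H2] := HT x.
exists (`|h^-1| * (c1 + c2) + 1).
  by rewrite addr_ge0 // mulr_ge0 // addr_ge0.
move=> u; have := Hd h h0 hd u.
set A := (h^-1)%:C *: _ => Hr.
have -> : D u = A - (A - D u) by rewrite opprB addrC subrK.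
apply: (le_trans (nnB _ _)); rewrite mulrDl mul1r; apply: lerD => //.
rewrite /A nnZ -mulrA; apply: ler_wpM2l; first exact: normr_ge0.
rewrite mulrDl; apply: (le_trans (nnB _ _)); apply: lerD; [exact: H1 | exact: H2].
by rewrite mul1r in Hr.
Qed.

Lemma deriv_cont U W (T : R -> U -> W) x D c :
  hasd T x D -> 0 <= c -> nbd D c ->
  forall eps : R, 0 < eps -> exists2 delta : R, 0 < delta &
    forall h : R, `|h| < delta -> forall u, nn (T (x + h) u - T x u) <= eps * nn u.
Proof.
move=> HD c0 Hc eps e0.
have [d d0 Hd] := HD 1 ltr01.
exists (Num.min d (eps / (1 + c))).
  by rewrite lt_min d0 divr_gt0 // ltr_pwDl.
move=> h; rewrite lt_min => /andP[hd he] u.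
have [->|h0] := eqVneq h 0; first by rewrite addr0 subrr nn0; apply: mulr_ge0; [exact: ltW | exact: nn_ge0].
have := Hd h h0 hd u; set A := (h^-1)%:C *: _ => Hr.
have -> : T (x + h) u - T x u = h%:C *: A.
  by rewrite /A scalerA -rmorphM mulfV // scale1r.
rewrite nnZ.
have : nn A <= (1 + c) * nn u.
  have -> : A = (A - D u) + D u by rewrite subrK.
  by apply: (le_trans (nnD _ _)); rewrite mulrDl; apply: lerD => //; exact: Hc.
move=> HA; apply: (le_trans (ler_wpM2l (normr_ge0 _) HA)).
rewrite mulrA; apply: ler_wpM2r; first exact: nn_ge0.
have c1 : 0 < 1 + c by rewrite ltr_pwDl.
by rewrite -ler_pdivlMr // ltW.
Qed.
End Deriv.

Lemma id3 (F : fieldType) (W : lmodType F) (k : F) (p q r s t w : W) :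
  k *: ((p + q) - r) - (w + s) = (k *: (p - r) - s) + (k *: q - t) + (t - w).
Proof.
rewrite -[RHS]addrA subrKA scalerBr scalerDr scalerBr opprD.
rewrite -!addrA; congr (_ + _); rewrite addrC -!addrA; congr (_ + _).
by rewrite addrC addrA addrC.
Qed.

Section Prod.
Variables (R : realType).
Implicit Types (U W V : normedModType R[i]).

Definition contat U W (F : R -> U -> W) x :=
  forall eps : R, 0 < eps -> exists2 delta : R, 0 < delta &
    forall h : R, `|h| < delta -> forall u, nn (F (x + h) u - F x u) <= eps * nn u.

Lemma prod_rule U V W (F : R -> V -> W) (G : R -> U -> V) x DF DG cG cDG cF d0 :
  hasd F x DF -> hasd G x DG -> 0 <= cG -> nbd (G x) cG -> 0 <= cDG -> nbd DG cDG ->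
  0 < d0 -> 0 <= cF ->
  (forall h, `|h| < d0 -> linear (F (x + h)) /\ nbd (F (x + h)) cF) ->
  contat F x ->
  hasd (fun y u => F y (G y u)) x (fun u => F x (DG u) + DF (G x u)).
Proof.
move=> HF HG cG0 HcG cDG0 HcDG d00 cF0 HFl HFc eps eps0.
set M := 1 + cG + cF + cDG.
have M0 : 0 < M by rewrite /M; lra.
set e := eps / (3%:R * M).
have e0 : 0 < e by rewrite /e divr_gt0 // mulr_gt0 // ltr0n.
have eM : e * M = eps / 3%:R.
  by rewrite /e invfM mulrA -mulrA mulVf ?gt_eqF // mulr1.
have cGM : cG <= M by rewrite /M; lra.
have cFM : cF <= M by rewrite /M; lra.
have cDGM : cDG <= M by rewrite /M; lra.
have [d1 d10 H1] := HF e e0.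
have [d2 d20 H2] := HG e e0.
have [d3 d30 H3] := HFc e e0.
exists (Num.min d0 (Num.min d1 (Num.min d2 d3))).
  by rewrite !lt_min d00 d10 d20 d30.
move=> h h0; rewrite !lt_min => /and4P[hd0 hd1 hd2 hd3] u.
have [Hlin HcF] := HFl h hd0.
set k := (h^-1)%:C.
have eq1 : G (x + h) u = G x u + (G (x + h) u - G x u) by rewrite [RHS]addrC subrK.
rewrite eq1 (linD Hlin).
rewrite (id3 k (F (x + h) (G x u)) (F (x + h) (G (x + h) u - G x u)) (F x (G x u))
   (DF (G x u)) (F (x + h) (DG u)) (F x (DG u))).
rewrite -(linZ Hlin) -(linB Hlin).
have Hb : forall a b c : R, a <= e * c -> e * c <= eps / 3%:R * c -> a <= eps / 3%:R * c.
  by move=> a b c ha hb; apply: le_trans hb.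
have E3 : eps * nn u = eps / 3%:R * nn u + eps / 3%:R * nn u + eps / 3%:R * nn u.
  by lra.
rewrite E3; apply: (le_trans (nnD _ _)); apply: lerD; first apply: (le_trans (nnD _ _)); first apply: lerD.
- apply: (le_trans (H1 h h0 hd1 (G x u))); rewrite -eM -mulrA ler_pM2l //.
  apply: (le_trans (HcG u)); apply: ler_wpM2r => //; exact: nn_ge0.
- apply: (le_trans (HcF _)); apply: (le_trans (ler_wpM2l cF0 (H2 h h0 hd2 u))).
  rewrite -eM mulrCA -[X in _ <= X]mulrA ler_pM2l //.
  apply: ler_wpM2r => //; exact: nn_ge0.
- apply: (le_trans (H3 h hd3 (DG u))); rewrite -eM -mulrA ler_pM2l //.
  apply: (le_trans (HcDG u)); apply: ler_wpM2r => //; exact: nn_ge0.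
Qed.
End Prod.

Section Fix.
Variables (R : realType) (K : completeNormedModType R[i]).

Lemma fixpt (Q : K -> K) : linear Q -> nbd Q (2^-1) -> forall z, exists w, w = z + Q w.
Proof.
move=> HQ HQb z.
set q : R := 2^-1.
have q0 : 0 <= q by rewrite /q invr_ge0 ler0n.
have q1 : q < 1 by rewrite /q invf_lt1 // ltr1n.
pose f := fun w : K => z + Q w.
pose y := fun n => iter n f 0.
have yS n : y n.+1 = z + Q (y n) by [].
have step n : nn (y n.+1 - y n) <= q ^+ n * nn z.
  elim: n => [|n IH].
    by rewrite /y /= /f (lin0 HQ) !addr0 subr0 expr0 mul1r.
  rewrite !yS opprD addrACA subrr add0r -(linB HQ).
  apply: (le_trans (HQb _)); rewrite exprS -mulrA ler_wpM2l //.
have dist n k : nn (y (n + k)%N - y n) <= (2%:R * q ^+ n - 2%:R * q ^+ (n + k)) * nn z.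
  elim: k => [|k IH]; first by rewrite addn0 !subrr nn0 mul0r.
  rewrite addnS.
  have -> : y (n + k).+1 - y n = (y (n + k).+1 - y (n + k)%N) + (y (n + k)%N - y n)
    by rewrite addrA subrK.
  apply: (le_trans (nnD _ _)); apply: (le_trans (lerD (step _) IH)).
  rewrite -mulrDl; apply: ler_wpM2r; first exact: nn_ge0.
  have -> : q ^+ (n + k).+1 = q ^+ (n + k) * q by rewrite exprSr.
  have : 2%:R * q = 1 :> R by rewrite /q mulfV // pnatr_eq0.
  move=> h2; set a := q ^+ (n + k).
  have -> : 2%:R * (a * q) = a by rewrite mulrCA h2 mulr1.
  lra.
have dist2 n m : (n <= m)%N -> nn (y m - y n) <= 2%:R * q ^+ n * nn z.
  move=> nm; rewrite -(subnKC nm); apply: (le_trans (dist _ _)).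
  apply: ler_wpM2r; first exact: nn_ge0.
  rewrite lerBlDr lerDl; apply: mulr_ge0; [exact: ler0n | exact: exprn_ge0].
have cy : cvgn y.
  apply/cauchy_cvgP; apply: cauchy_exP => e e0.
  have eR : e = (complex.Re e)%:C.
    by rewrite RRe_real // gtr0_real.
  have e'0 : 0 < complex.Re e by rewrite -ltcR -eR.
  set e' := complex.Re e in eR e'0.
  have hc := @cvg_expr R q.
  have : `|q| < 1 by rewrite ger0_norm.
  move=> /hc /cvgrPdist_lt /(_ (e' / (2%:R * nn z + 1))) [].
    by rewrite divr_gt0 // ltr_pwDr // mulr_ge0 ?ler0n ?nn_ge0.
  move=> N _ HN; exists (y N); exists N => // n /= Nn.
  rewrite -ball_normE /ball_ /= nnE eR ltcR.
  have := HN N (leqnn N); rewrite sub0r normrN ger0_norm ?exprn_ge0 // => hq.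
  rewrite -nnN opprB; apply: (le_lt_trans (dist2 _ _ Nn)).
  have hz : 0 <= nn z := nn_ge0 z.
  have hq0 : 0 <= q ^+ N := exprn_ge0 N q0.
  rewrite ltr_pdivlMr ?ltr_pwDr ?mulr_ge0 ?ler0n // in hq.
  set a := q ^+ N in hq hq0 *; nra.
set l := limn y.
have Hl : y @ \oo --> l := cy.
exists l; apply/eqP; rewrite -subr_eq0; apply/eqP; apply: nn_eq0.
rewrite leNgt; apply/negP => hpos.
set v := nn (l - (z + Q l)) in hpos.
have hv : 0 < (v / 4%:R)%:C by rewrite ltcR divr_gt0 // ltr0n.
have [N _ HN] := proj1 (cvgrPdist_lt _ _) Hl _ hv.
have h1 := HN N.+1 (leqnSn N); have h2 := HN N (leqnn N).
rewrite !nnE ltcR in h1 h2.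
have : v <= nn (l - y N.+1) + 2^-1 * nn (l - y N).
  rewrite /v.
  have -> : l - (z + Q l) = (l - y N.+1) + (y N.+1 - (z + Q l)) by rewrite addrA subrK.
  apply: (le_trans (nnD _ _)); apply: lerD => //.
  rewrite yS opprD addrACA subrr add0r -(linB HQ) -nnN -(linN HQ) opprB.
  exact: HQb.
move: h2; rewrite ltcR => h2 hh.
lra.
Qed.
End Fix.

Section Inv.
Variables (R : realType) (K : completeNormedModType R[i]).

Lemma binv_unique (X Y Z : K -> K) : bounded_inverse X Y -> bounded_inverse X Z ->
  forall u, Y u = Z u.
Proof.
move=> [_ [HY1 HY2]] [_ [HZ1 HZ2]] u.
by rewrite -{1}(HZ1 u) HY2.
Qed.

Lemma inv_bound (X0 X1 P : K -> K) M d :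
  bounded_inverse X0 P -> 0 <= M -> nbd P M -> linear X1 ->
  nbd (fun v => X1 v - X0 v) d -> M * d <= 2^-1 ->
  forall w, nn w <= 2%:R * M * nn (X1 w).
Proof.
move=> [[PL _] [H1 H2]] M0 HP HX1 Hd Md w.
have e : w = P (X1 w) - P (X1 w - X0 w) by rewrite -(linB PL) opprB addrC subrK H2.
have : nn w <= M * nn (X1 w) + M * (d * nn w).
  rewrite {1}e; apply: (le_trans (nnB _ _)); apply: lerD; first exact: HP.
  apply: (le_trans (HP _)); apply: ler_wpM2l => //; exact: Hd.
rewrite mulrA => h.
have hw := nn_ge0 w.
have : M * d * nn w <= 2^-1 * nn w by apply: ler_wpM2r.
set a := M * d * nn w in h *; set b := M * nn (X1 w) in h *.
rewrite -mulrA -/b; lra.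
Qed.

Lemma inv_exists (X0 X1 P : K -> K) M d :
  bounded_inverse X0 P -> 0 <= M -> nbd P M -> linear X0 -> linear X1 ->
  nbd (fun v => X1 v - X0 v) d -> 0 <= d -> M * d <= 2^-1 ->
  exists Y, bounded_inverse X1 Y.
Proof.
move=> HB M0 HP HX0 HX1 Hd d0 Md.
have HBd := HB; move: HB => [[PL _] [H1 H2]].
have IB := inv_bound HBd M0 HP HX1 Hd Md.
pose Q := fun w => P (X0 w - X1 w).
have QL : linear Q.
  move=> a u v; rewrite /Q (linD HX0) (linD HX1) !(linZ HX0) !(linZ HX1).
  rewrite -(linZ PL) -(linD PL); congr (P _).
  by rewrite scalerBr opprD addrACA.
have Qb : nbd Q (2^-1).
  move=> w; rewrite /Q; apply: (le_trans (HP _)).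
  rewrite -nnN opprB.
  apply: (le_trans (ler_wpM2l M0 (Hd w))); rewrite mulrA.
  apply: ler_wpM2r => //; exact: nn_ge0.
have surj : forall u, exists w, X1 w = u.
  move=> u; have [w Hw] := fixpt QL Qb (P u).
  exists w.
  have : X0 w = u + (X0 w - X1 w) by rewrite {1}Hw /Q (linD HX0) !H1.
  move=> h0.
  have -> : X1 w = X0 w - (X0 w - X1 w) by rewrite opprB addrC subrK.
  by rewrite {1}h0 addrK.
have inj : forall w, X1 w = 0 -> w = 0.
  move=> w h; apply: nn_eq0; apply: (le_trans (IB w)); by rewrite h nn0 mulr0.
have [Y HY] := choice surj.
have YK : forall w, Y (X1 w) = w.
  move=> w; apply/eqP; rewrite -subr_eq0; apply/eqP; apply: inj.
  by rewrite (linB HX1) HY subrr.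
exists Y; split; last by split.
split.
  move=> a u v; apply/eqP; rewrite -subr_eq0; apply/eqP; apply: inj.
  by rewrite (linB HX1) (linD HX1) (linZ HX1) !HY subrr.
exists (2%:R * M)%:C => u; rewrite !nnE -rmorphM lecR.
by have := IB (Y u); rewrite HY.
Qed.
End Inv.

Section InvLocal.
Variables (R : realType) (K : completeNormedModType R[i]).
Variables (X Xinv : R -> K -> K) (x : R) (X' : K -> K) (cX' M : R).
Hypotheses (XL : forall y, linear (X y)) (HXd : hasd X x X') (cX'0 : 0 <= cX')
  (HX' : nbd X' cX')
  (HXinv : forall y, (exists Y, bounded_inverse (X y) Y) -> bounded_inverse (X y) (Xinv y))
  (HP : bounded_inverse (X x) (Xinv x)) (M0 : 0 <= M) (HM : nbd (Xinv x) M).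

Lemma inv_local : exists2 d0, 0 < d0 & forall h, `|h| < d0 ->
  bounded_inverse (X (x + h)) (Xinv (x + h)) /\ nbd (Xinv (x + h)) (2%:R * M).
Proof.
have e0 : 0 < 2^-1 / (M + 1) by rewrite divr_gt0 // ?invr_gt0 ?ltr0n // ltr_pwDr.
have [d d0 Hd] := deriv_cont HXd cX'0 HX' e0.
exists d => // h hd.
have Md : M * (2^-1 / (M + 1)) <= 2^-1.
  rewrite mulrCA; apply: ler_piMr; first by rewrite invr_ge0 ler0n.
  by rewrite ler_pdivrMr ?ltr_pwDr // mul1r lerDl.
have Hb : nbd (fun v => X (x + h) v - X x v) (2^-1 / (M + 1)) := Hd h hd.
have [Y HY] := inv_exists HP M0 HM (XL x) (XL (x + h)) Hb (ltW e0) Md.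
have HI : bounded_inverse (X (x + h)) (Xinv (x + h)) by apply: HXinv; exists Y.
split => // u.
have := inv_bound HP M0 HM (XL (x + h)) Hb Md (Xinv (x + h) u).
by case: HI => _ [-> _].
Qed.

Lemma inv_diff h u : bounded_inverse (X (x + h)) (Xinv (x + h)) ->
  Xinv (x + h) u - Xinv x u = - Xinv (x + h) (X (x + h) (Xinv x u) - X x (Xinv x u)).
Proof.
move=> [[L _] [H1 H2]]; case: HP => _ [P1 P2].
by rewrite -(linN L) opprB (linB L) H2 P1.
Qed.

Lemma inv_cont : contat Xinv x.
Proof.
have [d0 d00 Hd0] := inv_local.
move=> eps eps0.
set e := eps / (2%:R * M * M + 1).
have e0 : 0 < e by rewrite divr_gt0 // ltr_pwDr // !mulr_ge0 ?ler0n.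
have [d d1 Hd] := deriv_cont HXd cX'0 HX' e0.
exists (Num.min d0 d); first by rewrite lt_min d00 d1.
move=> h; rewrite lt_min => /andP[h0 h1] u.
have [HI HIb] := Hd0 h h0.
rewrite (inv_diff u HI) nnN; apply: (le_trans (HIb _)).
apply: (le_trans (ler_wpM2l _ (Hd h h1 _))); first by rewrite mulr_ge0 ?ler0n.
apply: (le_trans (ler_wpM2l _ (ler_wpM2l (ltW e0) (HM u)))); first by rewrite mulr_ge0 ?ler0n.
rewrite !mulrA; apply: ler_wpM2r; first exact: nn_ge0.
have hz : 2%:R * M * M + 1 != 0 by rewrite gt_eqF // ltr_pwDr // !mulr_ge0 ?ler0n.
have -> : 2%:R * M * eps / (2%:R * M * M + 1) * M = eps * (2%:R * M * M / (2%:R * M * M + 1)).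
  by ring.
apply: ler_piMr; first exact: ltW.
by rewrite ler_pdivrMr ?ltr_pwDr ?mulr_ge0 ?ler0n // mul1r lerDl.
Qed.

Lemma inv_deriv : hasd Xinv x (fun u => - Xinv x (X' (Xinv x u))).
Proof.
have [d0 d00 Hd0] := inv_local.

move=> eps eps0.
set c := 2%:R * M * M + cX' * M + 1.
have c0 : 0 < c by rewrite /c ltr_pwDr // addr_ge0 // !mulr_ge0 ?ler0n.
set e := eps / c.
have e0 : 0 < e by rewrite divr_gt0.
have [d1 d10 H1] := HXd e0.
have [d2 d20 H2] := inv_cont e0.
exists (Num.min d0 (Num.min d1 d2)); first by rewrite !lt_min d00 d10 d20.
move=> h hn0; rewrite !lt_min => /and3P[h0 h1 h2] u.
have [HI HIb] := Hd0 h h0.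
have [[L _] _] := HI.
set v := Xinv x u.
rewrite (inv_diff u HI) -/v scalerN -(linZ L).
set r := (h^-1)%:C *: (X (x + h) v - X x v) - X' v.
have -> : (h^-1)%:C *: (X (x + h) v - X x v) = r + X' v by rewrite subrK.
rewrite (linD L).
have -> : forall a b c' : K, - (a + b) - - c' = - a - (b - c').
  by move=> a b c'; rewrite opprK opprD opprB addrA addrAC.
apply: (le_trans (nnB _ _)); rewrite nnN.
have hv : nn v <= M * nn u := HM u.
have hr : nn r <= e * nn v := H1 h hn0 h1 v.
have hX : nn (X' v) <= cX' * nn v := HX' v.
have ha : nn (Xinv (x + h) r) <= 2%:R * M * (e * nn v).
  apply: (le_trans (HIb r)); apply: ler_wpM2l => //; rewrite mulr_ge0 ?ler0n //.
have hb : nn (Xinv (x + h) (X' v) - Xinv x (X' v)) <= e * (cX' * nn v).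
  apply: (le_trans (H2 h h2 (X' v))); by rewrite ler_pM2l.
have hv0 := nn_ge0 v; have hu0 := nn_ge0 u.
have Heps : eps = e * c by rewrite /e mulfVK // gt_eqF.
rewrite Heps /c.
have : e * (cX' * nn v) <= e * (cX' * (M * nn u)).
  by rewrite ler_pM2l //; apply: ler_wpM2l.
have : 2%:R * M * (e * nn v) <= 2%:R * M * (e * (M * nn u)).
  apply: ler_wpM2l; first by rewrite mulr_ge0 ?ler0n.
  by rewrite ler_pM2l.
have : 0 <= e * nn u by apply: mulr_ge0; [exact: ltW | exact: nn_ge0].
move: ha hb; nra.
Qed.
End InvLocal.

Lemma unif_bound (R : realType) (U W : normedModType R[i]) (F : R -> U -> W) x c :
  contat F x -> nbd (F x) c -> exists2 d0 : R, 0 < d0 &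
    forall h, `|h| < d0 -> nbd (F (x + h)) (c + 1).
Proof.
move=> Hc Hb; have [d d0 Hd] := Hc 1 ltr01.
exists d => // h hd u.
have -> : F (x + h) u = (F (x + h) u - F x u) + F x u by rewrite subrK.
apply: (le_trans (nnD _ _)); rewrite mulrDl mul1r addrC.
apply: lerD; [exact: Hb | by have := Hd h hd u; rewrite mul1r].
Qed.

Theorem mainTheorem6 (R : realType) (K : completeNormedModType R[i])
  (ip kf : K -> K -> R[i]) (s1 s2 g : 'M[R[i]]_2)
  (SA SZ : R -> K -> K) (dom : set K) (A Az : K -> K)
  (C : R -> K -> 'cV[R[i]]_2) (X : R -> K -> K) (B : R -> 'cV[R[i]]_2 -> K)
  (Xinv : R -> K -> K) (Omega : set R) :
  hilbert_ip ip -> krein_form kf ->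
  s1 \in unitmx -> mxadj s1 = s1 -> mxadj s2 = s2 -> mxadj g = - g ->
  C0_group SA -> generator SA dom A ->
  C0_group SZ -> generator SZ dom Az ->
  prevessel s1 s2 g A Az dom C X B ->
  (* Xinv y denotes X(y)^-1 wherever X(y) is boundedly invertible *)
  (forall y, (exists Y, bounded_inverse (X y) Y) -> bounded_inverse (X y) (Xinv y)) ->
  (* vessel on Omega: the node is invertible at every x in Omega *)
  (forall x, Omega x ->
     (exists Y, bounded_inverse (X x) Y) /\ (forall u, dom u -> dom (Xinv x u))) ->
  forall x, Omega x ->
    (exists D, has_opderiv (fun y u => C y (Xinv y u)) x D /\
       forall u, dom u ->
         s1 *m D u = s2 *m C x (Xinv x (A u)) + gamma_star s1 s2 g C Xinv B x (C x (Xinv x u))) /\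
    (exists E, has_opderiv (fun y e => Xinv y (B y e)) x E /\
       forall e, E (s1 *m e) = Az (Xinv x (B x (s2 *m e))) - Xinv x (B x (gamma_star s1 s2 g C Xinv B x e))).
Proof.
move=> _ _ s1U _ _ _ _ _ _ _ PV HXinv HV x Hx.
have [[Y HY] Hdom] := HV x Hx.
have HP : bounded_inverse (X x) (Xinv x) by apply: HXinv; exists Y.
have [PB [P1 P2]] := HP. have PL := PB.1.
have [[HCb [HXb [HBb [HXdom Hnode]]]] [HBdom [HBd [[DC [HDC HDCf]] HXd]]]] := PV x.
have CL y : linear (C y) by have [[[L _] _] _] := PV y.
have XL y : linear (X y) by have [[_ [[L _] _]] _] := PV y.
have BL y : linear (B y) by have [[_ [_ [[L _] _]]] _] := PV y.
have Cb y : exists2 c, 0 <= c & nbd (C y) c by apply: bounded_nbd; have [[L _] _] := PV y.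
have Xb y : exists2 c, 0 <= c & nbd (X y) c by apply: bounded_nbd; have [[_ [L _]] _] := PV y.
have Bb y : exists2 c, 0 <= c & nbd (B y) c by apply: bounded_nbd; have [[_ [_ [L _]]] _] := PV y.
move/hasdP: HBd => HBd; move/hasdP: HDC => HDC; move/hasdP: HXd => HXd.
have [M M0 HM] := bounded_nbd PB.
have [cX' cX'0 HX'] := deriv_nbd HXd Xb.
have HDXi := inv_deriv XL HXd cX'0 HX' HXinv HP M0 HM.
have HXic := inv_cont XL HXd cX'0 HX' HXinv HP M0 HM.
have [d0 d00 Hloc] := inv_local XL HXd cX'0 HX' HXinv HP M0 HM.
set P := Xinv x in HDXi HXic Hloc P1 P2 PL PB HM Hdom HP *.
set X' := fun u => B x (s2 *m C x u) in HX' HDXi HXic Hloc HXd *.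
have HDXib : nbd (fun u => - P (X' (P u))) (M * cX' * M).
  move=> u; rewrite nnN; apply: (le_trans (HM _)); rewrite -!mulrA.
  apply: ler_wpM2l => //; apply: (le_trans (HX' _)).
  apply: ler_wpM2l => //; exact: HM.
have cDG0 : 0 <= M * cX' * M by rewrite !mulr_ge0.
split.
- have [cDC cDC0 HDCb] := deriv_nbd HDC Cb.
  have HCc := deriv_cont HDC cDC0 HDCb.
  have [cC cC0 HCx] := Cb x.
  have [d1 d10 Hu] := unif_bound HCc HCx.
  have := prod_rule HDC HDXi M0 HM cDG0 HDXib d10 (addr_ge0 cC0 ler01)
    (fun h hh => conj (CL (x + h)) (Hu h hh)) HCc.
  move=> Hprod; eexists; split; first by apply/hasdP; exact: Hprod.
  move=> u du /=.
  have Pu : Xinv x u = P u by [].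
  rewrite Pu /gamma_star -/P.
  set v := P u.
  have dv : dom v := Hdom u du.
  rewrite (HDCf v dv).
  have hn := Hnode v dv; rewrite P1 in hn.
  move/eqP: hn; rewrite addrAC addrC addr_eq0 => /eqP hb.
  have HAz : Az v = - (P (A u) + P (B x (s1 *m C x v))).
    by rewrite -[Az v]P2 hb (linN PL) (linD PL).
  rewrite HAz mulmxDr mulmxA mulmxV // mul1mx.
  rewrite !(linN (CL x)) (linD (CL x)) !mulmxN mulmxDr opprK.
  set a := s1 *m C x (P (B x (s2 *m C x v))).
  set b := s2 *m C x (P (A u)).
  set c := s2 *m C x (P (B x (s1 *m C x v))).
  set d := g *m C x v.
  by rewrite addrC -!addrA [c + _]addrCA.
- have [cB cB0 HBx] := Bb x.
  have [cDB cDB0 HDBb] := deriv_nbd HBd Bb.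
  have cF0 : 0 <= 2%:R * M by rewrite mulr_ge0 ?ler0n.
  have := prod_rule HDXi HBd cB0 HBx cDB0 HDBb d00 cF0
    (fun h hh => let: conj HI HIb := Hloc h hh in conj HI.1.1 HIb) HXic.
  move=> Hprod; eexists; split; first by apply/hasdP; exact: Hprod.
  move=> e /=.
  have ie : invmx s1 *m (s1 *m e) = e by rewrite mulmxA mulVmx // mul1mx.
  rewrite /gamma_star -/P /X' ie.
  set v := P (B x (s2 *m e)).
  have dv : dom v := Hdom _ (HBdom e).
  have hn := Hnode v dv; rewrite P1 in hn.
  move/eqP: hn; rewrite -addrA addr_eq0 => /eqP hb.
  rewrite hb (linN PL) (linD PL) (linN PL) (linD PL) P2.
  rewrite !(linB (BL x)) (linD (BL x)) !(linB PL) (linD PL).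
  set z := Az v.
  set p := P (B x (s1 *m C x v)).
  set r := P (B x (g *m e)).
  set q := P (B x (s2 *m C x (P (B x (s1 *m e))))).
  by rewrite opprD opprK opprB opprD !addrA.
Qed.
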